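(* Let $\mathfrak K=(K,\bigsqcup,\odot,{}^*,{\sim},e)$ be an involutive generalized dynamic algebra. Then the map $K\to\widetilde K$, $x\mapsto{\sim}{\sim}x$, is a surjective homomorphism of left $K$-modules (where $K$ is a left module over itself via $\odot$ and $\widetilde K$ carries the join $\bigvee$ and action $\bullet$), and $\equiv$ is a quantale congruence on $K$.
   Context: An involutive unital quantale is $(Q,\bigsqcup,\odot,{}^*,e)$: $Q$ a complete join-semilattice, $\odot$ associative and distributing over arbitrary joins in each argument, $e$ a unit, ${}^*$ with $x^{**}=x$, $(x\odot y)^*=y^*\odot x^*$, $(\bigsqcup_i x_i)^*=\bigsqcup_i x_i^*$. An involutive generalized dynamic algebra is $\mathfrak K=(K,\bigsqcup,\odot,{}^*,{\sim},e)$ with $(K,\bigsqcup,\odot,{}^*,e)$ an involutive unital quantale and ${\sim}\colon K\to K$ such that for all $x,y\in K$ and families $(x_i)$: ${\sim}(x\odot{\sim}{\sim}y)={\sim}(x\odot y)$; ${\sim}(\bigsqcup_i{\sim}{\sim}x_i)={\sim}(\bigsqcup_i x_i)$; $({\sim}x)^*={\sim}x$; ${\sim}{\sim}({\sim}{\sim}x\odot y)={\sim}({\sim}x\sqcup{\sim}({\sim}x\sqcup y))$. Test set $\widetilde K=\{{\sim}k\mid k\in K\}$; $\bigvee W={\sim}{\sim}(\bigsqcup W)$ for $W\subseteq\widetilde K$; action $k\bullet v={\sim}{\sim}(k\odot v)$ for $k\in K$, $v\in\widetilde K$ (this makes $(\widetilde K,\bigvee,\bullet)$ a left $K$-module). $k\equiv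 l$ iff $k\bullet w=l\bullet w$ for all $w\in\widetilde K$. A homomorphism of left $K$-modules preserves arbitrary joins and the action. A quantale congruence is an equivalence relation preserving arbitrary joins and multiplication (if $x_i\equiv y_i$ for all $i$ then $\bigsqcup x_i\equiv\bigsqcup y_i$; if $u\equiv v$, $s\equiv t$ then $u\odot s\equiv v\odot t$). *)

(* Defs.v *)
Set Implicit Arguments.
Section Defs.
Variable K : Type.

Definition fsup (sup : (K -> Prop) -> K) {I : Type} (x : I -> K) : K :=
  sup (fun k => exists i, x i = k).

Definition is_complete_join_semilattice (le : K -> K -> Prop)
    (sup : (K -> Prop) -> K) : Prop :=
  (forall x, le x x) /\
  (forall x y, le x y -> le y x -> x = y) /\
  (forall x y z, le x y -> le y z -> le x z) /\
  (forall S x, S x -> le x (sup S)) /\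
  (forall S u, (forall x, S x -> le x u) -> le (sup S) u).

Definition is_involutive_unital_quantale (le : K -> K -> Prop)
    (sup : (K -> Prop) -> K) (mul : K -> K -> K) (star : K -> K) (e : K) : Prop :=
  is_complete_join_semilattice le sup /\
  (forall x y z, mul x (mul y z) = mul (mul x y) z) /\
  (forall (I : Type) (x : I -> K) a,
      mul a (fsup sup x) = fsup sup (fun i => mul a (x i))) /\
  (forall (I : Type) (x : I -> K) a,
      mul (fsup sup x) a = fsup sup (fun i => mul (x i) a)) /\
  (forall x, mul e x = x) /\ (forall x, mul x e = x) /\
  (forall x, star (star x) = x) /\
  (forall x y, star (mul x y) = mul (star y) (star x)) /\
  (forall (I : Type) (x : I -> K),
      star (fsup sup x) = fsup sup (fun i => star (x i))).

Definition is_IGDA (le : K -> K -> Prop) (sup : (K -> Prop) -> K)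
    (mul : K -> K -> K) (star : K -> K) (neg : K -> K) (e : K) : Prop :=
  is_involutive_unital_quantale le sup mul star e /\
  (forall x y, neg (mul x (neg (neg y))) = neg (mul x y)) /\
  (forall (I : Type) (x : I -> K),
      neg (fsup sup (fun i => neg (neg (x i)))) = neg (fsup sup x)) /\
  (forall x, star (neg x) = neg x) /\
  (forall x y, neg (neg (mul (neg (neg x)) y))
               = neg (sup (fun k => k = neg x \/ k = neg (sup (fun l => l = neg x \/ l = y))))).

Definition test_set (neg : K -> K) (v : K) : Prop := exists k, v = neg k.

Definition tjoin (sup : (K -> Prop) -> K) (neg : K -> K) {I : Type} (w : I -> K) : K :=
  neg (neg (fsup sup w)).

Definition tact (mul : K -> K -> K) (neg : K -> K) (k v : K) : K :=
  neg (neg (mul k v)).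

Definition test_equiv (mul : K -> K -> K) (neg : K -> K) (k l : K) : Prop :=
  forall w, test_set neg w -> tact mul neg k w = tact mul neg l w.

Definition is_left_module_hom_to_tests (sup : (K -> Prop) -> K) (mul : K -> K -> K)
    (neg : K -> K) (f : K -> K) : Prop :=
  (forall x, test_set neg (f x)) /\
  (forall (I : Type) (x : I -> K),
      f (fsup sup x) = tjoin sup neg (fun i => f (x i))) /\
  (forall k x, f (mul k x) = tact mul neg k (f x)).

Definition is_quantale_congruence (sup : (K -> Prop) -> K) (mul : K -> K -> K)
    (R : K -> K -> Prop) : Prop :=
  (forall x, R x x) /\ (forall x y, R x y -> R y x) /\
  (forall x y z, R x y -> R y z -> R x z) /\
  (forall (I : Type) (x y : I -> K), (forall i, R (x i) (y i)) ->
      R (fsup sup x) (fsup sup y)) /\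
  (forall u v s t, R u v -> R s t -> R (mul u s) (mul v t)).

End Defs.

(* Main.v *)
Require Import Defs.
From Stdlib Require Import FunctionalExtensionality.

Theorem proposition3p4 (K : Type) (le : K -> K -> Prop) (sup : (K -> Prop) -> K)
    (mul : K -> K -> K) (star : K -> K) (neg : K -> K) (e : K) :
  is_IGDA le sup mul star neg e ->
  (is_left_module_hom_to_tests sup mul neg (fun x => neg (neg x)) /\
   (forall v, test_set neg v -> exists x, neg (neg x) = v)) /\
  is_quantale_congruence sup mul (test_equiv mul neg).
Proof.
  intros [[_ [Hassoc [_ [Hdr [He1 _]]]]] [A1 [A2 _]]].
  assert (Hnnn : forall y, neg (neg (neg y)) = neg y).
  { intro y. pose proof (A1 e y) as H. rewrite !He1 in H. exact H. }
  assert (Hact : forall k x, neg (neg (mul k (neg (neg x)))) = neg (neg (mul k x))).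
  { intros k x. rewrite A1. reflexivity. }
  assert (Hjoin : forall (I : Type) (x : I -> K),
     neg (neg (fsup sup (fun i => neg (neg (x i))))) = neg (neg (fsup sup x))).
  { intros I x. rewrite A2. reflexivity. }
  split; [split; [split; [|split]|] |].
  - intro x. exists (neg x). reflexivity.
  - intros I x. unfold tjoin. symmetry. apply Hjoin.
  - intros k x. unfold tact. symmetry. apply Hact.
  - intros v [k ->]. exists (neg k). apply Hnnn.
  - split; [|split; [|split; [|split]]].
    + intros x w _. reflexivity.
    + intros x y H w Hw. symmetry. apply H; auto.
    + intros x y z H1 H2 w Hw. rewrite H1 by auto. apply H2; auto.
    + intros I x y H w Hw. unfold tact. rewrite !Hdr.
      rewrite <- (Hjoin I (fun i => mul (x i) w)).
      rewrite <- (Hjoin I (fun i => mul (y i) w)).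
      f_equal. f_equal. f_equal. apply functional_extensionality. intro i.
      apply (H i w Hw).
    + intros u v s t Huv Hst w Hw. unfold tact in *.
      rewrite <- !Hassoc.
      rewrite <- (Hact u (mul s w)), <- (Hact v (mul t w)).
      pose proof (Hst w Hw) as E; unfold tact in E; rewrite E.
      apply Huv. exists (neg (mul t w)). reflexivity.
Qed.
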